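(* Let $\mathbf{S}$ be a distributive meet semilattice, $n\ge1$ an integer, and $U$ an upset of $\mathbf{S}$. Then for every $a\in\mathbf{S}$, $a$ belongs to the $n$-filter generated by $U$ if and only if there is a non-empty finite set $X\subseteq U$ such that $\bigwedge Y\in U$ for each $Y\subseteq_n X$ and $\bigwedge X\le a$. Moreover, the condition $\bigwedge X\le a$ may equivalently be replaced by $\bigwedge X=a$.
   Context: A meet semilattice is distributive if whenever $x\wedge y\le z$ there are $x'\ge x$ and $y'\ge y$ with $x'\wedge y'=z$. For a set $X$, $Y\subseteq_n X$ means $Y$ is a non-empty subset of $X$ with $|Y|\le n$. An $n$-filter on a meet semilattice $\mathbf{S}$ is an upset $F\subseteq\mathbf{S}$ such that for every non-empty finite $X\subseteq F$: if $\bigwedge Y\in F$ for every $Y\subseteq_n X$, then $\bigwedge X\in F$. The $n$-filters are closed under arbitrary intersections, and the $n$-filter generated by a set is the smallest $n$-filter containing it. *)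

(* Defs.v *)
From HB Require Import structures.
From mathcomp Require Import all_boot all_order.
From mathcomp Require Import finmap.
Set Implicit Arguments. Unset Strict Implicit. Unset Printing Implicit Defensive.
Import Order.TTheory.
Local Open Scope order_scope.
Local Open Scope fset_scope.

Section NFilters.
Context {disp : Order.disp_t} {S : meetSemilatticeType disp}.

Definition fmeet (X : {fset S}) : option S :=
  match enum_fset X with
  | x :: s => Some (foldr Order.meet x s)
  | [::] => None
  end.

Definition meet_in (P : S -> Prop) (X : {fset S}) : Prop :=
  exists2 m, fmeet X = Some m & P m.

Definition distributive_msl : Prop :=
  forall x y z : S, Order.meet x y <= z ->
    exists x' y' : S, [/\ x <= x', y <= y' & Order.meet x' y' = z].

Definition upset (U : S -> Prop) : Prop :=
  forall x y : S, U x -> x <= y -> U y.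

Definition subset_n (n : nat) (Y X : {fset S}) : Prop :=
  [/\ Y != fset0, Y `<=` X & (#|` Y| <= n)%N].

Definition n_filter (n : nat) (F : S -> Prop) : Prop :=
  upset F /\
  forall X : {fset S}, X != fset0 -> (forall x, x \in X -> F x) ->
    (forall Y, subset_n n Y X -> meet_in F Y) -> meet_in F X.

Definition gen_n_filter (n : nat) (U : S -> Prop) (a : S) : Prop :=
  forall F, n_filter n F -> (forall x, U x -> F x) -> F a.

End NFilters.

(* Main.v *)
Require Import Defs.
From HB Require Import structures.
From mathcomp Require Import all_boot all_order.
From mathcomp Require Import finmap.
From Stdlib Require Import ClassicalEpsilon.
Set Implicit Arguments. Unset Strict Implicit. Unset Printing Implicit Defensive.
Import Order.TTheory.
Local Open Scope order_scope.
Local Open Scope fset_scope.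

Section Aux.
Context {disp : Order.disp_t} {S : meetSemilatticeType disp}.

Definition glbs (s : seq S) (m : S) : Prop :=
  forall c, c <= m <-> (forall x, x \in s -> c <= x).

Lemma glbs_foldr (x : S) (s : seq S) : glbs (x :: s) (foldr Order.meet x s).
Proof.
elim: s => [|y s IH] c /=.
  split; first by move=> H z; rewrite inE => /eqP ->.
  by apply; rewrite inE.
rewrite lexI; split.
  move=> /andP[Hy Hr] z; rewrite !inE => /orP[/eqP->|/orP[/eqP->|Hz]] //.
    by apply/(IH c).1 => //; rewrite inE eqxx.
  by apply/(IH c).1 => //; rewrite inE Hz orbT.
move=> H; apply/andP; split; first by apply: H; rewrite !inE eqxx orbT.
apply/(IH c).2 => z; rewrite inE => /orP[/eqP->|Hz]; apply: H; rewrite !inE ?eqxx //.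
by rewrite Hz !orbT.
Qed.

Lemma glbs_ex (s : seq S) : s != [::] -> exists m, glbs s m.
Proof. by case: s => // x s _; exists (foldr Order.meet x s); apply: glbs_foldr. Qed.

Lemma glbs_uniq s m m' : glbs s m -> glbs s m' -> m = m'.
Proof.
move=> H H'; apply/le_anti/andP; split.
  by apply/(H' m).2/(H m).1.
by apply/(H m').2/(H' m').1.
Qed.

Lemma fmeet_glb (X : {fset S}) m : fmeet X = Some m -> glbs (enum_fset X) m.
Proof.
rewrite /fmeet; case: (enum_fset X) => // x s [<-]; exact: glbs_foldr.
Qed.

Lemma fmeet_ex (X : {fset S}) : X != fset0 -> exists m, fmeet X = Some m.
Proof.
move=> /fset0Pn [x Hx]; rewrite /fmeet; move: Hx.
have -> : (x \in X) = (x \in enum_fset X) by [].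
by case: (enum_fset X) => // y s _; eexists.
Qed.

Lemma fmeet_glbE (X : {fset S}) m : X != fset0 -> glbs (enum_fset X) m -> fmeet X = Some m.
Proof.
move=> /fmeet_ex [m' E] H; rewrite E; congr Some; apply: glbs_uniq (fmeet_glb E) H.
Qed.


Lemma glbs_cons x s m m' : s != [::] -> glbs s m' -> glbs (x :: s) m -> m = Order.meet x m'.
Proof.
move=> _ Hs H; apply: glbs_uniq H _ => c; rewrite lexI; split.
  move=> /andP[Hx Hm] z; rewrite inE => /orP[/eqP->//|Hz]; exact: (Hs c).1 Hm z Hz.
move=> H; apply/andP; split; first by apply: H; rewrite inE eqxx.
by apply/(Hs c).2 => z Hz; apply: H; rewrite inE Hz orbT.
Qed.

Lemma split_dist (Hd : distributive_msl (S := S)) (s : seq S) :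
  s != [::] -> forall m c, glbs s m -> m <= c ->
  exists Q : seq S, [/\ Q != [::], glbs Q c & forall q, q \in Q -> exists2 x, x \in s & x <= q].
Proof.
elim: s => // x s IH _ m c Hm Hmc.
case: (eqVneq s [::]) => [E|Ns].
  subst s; exists [:: c]; split => //.
    by move=> d; split; [move=> H z; rewrite inE => /eqP-> | apply; rewrite inE].
  move=> q; rewrite inE => /eqP->; exists x; first by rewrite inE.
  by apply: le_trans Hmc; apply/(Hm x).2 => z; rewrite inE => /eqP->.
have [m' Hm'] := glbs_ex Ns.
have E := glbs_cons Ns Hm' Hm; subst m.
have [x' [y' [Hx Hy Exy]]] := Hd _ _ _ Hmc.
have [Q [NQ HQ HQs]] := IH Ns _ _ Hm' Hy.
exists (x' :: Q); split => //.
  move=> d; rewrite -Exy lexI; split.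
    move=> /andP[H1 H2] z; rewrite inE => /orP[/eqP->//|Hz]; exact: (HQ d).1 H2 z Hz.
  move=> H; apply/andP; split; first by apply: H; rewrite inE eqxx.
  by apply/(HQ d).2 => z Hz; apply: H; rewrite inE Hz orbT.
move=> q; rewrite inE => /orP[/eqP->|Hq]; first by exists x; rewrite ?inE ?eqxx.
by have [z Hz Hzq] := HQs q Hq; exists z; rewrite // inE Hz orbT.
Qed.

Lemma concat_lemma (R : S -> S -> Prop) (s : seq S) :
  (forall x, x \in s -> exists P : seq S, [/\ P != [::], glbs P x & forall p, p \in P -> R x p]) ->
  exists P : seq S, [/\ (P == [::]) = (s == [::]),
     (forall c, (forall p, p \in P -> c <= p) <-> (forall x, x \in s -> c <= x)) &
     forall p, p \in P -> exists2 x, x \in s & R x p].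
Proof.
elim: s => [|x s IH] H; first by exists [::]; split => // c; split => ? ?; rewrite in_nil.
have [P1 [N1 G1 R1]] := H x (mem_head _ _).
have [P2 [N2 G2 R2]] : exists P : seq S, [/\ (P == [::]) = (s == [::]),
     (forall c, (forall p, p \in P -> c <= p) <-> (forall x, x \in s -> c <= x)) &
     forall p, p \in P -> exists2 x, x \in s & R x p].
  by apply: IH => z Hz; apply: H; rewrite inE Hz orbT.
exists (P1 ++ P2); split.
- by move: N1; case: (P1) => //=; rewrite N2.
- move=> c; split.
    move=> Hc z; rewrite inE => /orP[/eqP->|Hz].
      by apply/(G1 c).2 => p Hp; apply: Hc; rewrite mem_cat Hp.
    by apply: (G2 c).1 => // p Hp; apply: Hc; rewrite mem_cat Hp orbT.
  move=> Hc p; rewrite mem_cat => /orP[Hp|Hp].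
    by apply: (G1 c).1 Hp; apply: Hc; rewrite inE eqxx.
  by apply: (G2 c).2 Hp => z Hz; apply: Hc; rewrite inE Hz orbT.
- move=> p; rewrite mem_cat => /orP[Hp|Hp]; first by exists x; [rewrite inE eqxx | exact: R1].
  by have [z Hz Hzp] := R2 p Hp; exists z; rewrite // inE Hz orbT.
Qed.


Lemma glbs_le s m x : glbs s m -> x \in s -> m <= x.
Proof. by move=> H Hx; apply: (H m).1 => //. Qed.

Lemma Lsplit (Hd : distributive_msl (S := S)) (L : seq {fset S}) :
  forall z : S, exists P : seq S, [/\ P != [::], glbs P z &
    forall p, p \in P -> forall W, W \in L -> meet_in (fun m => m <= z) W ->
      exists2 w, w \in W & w <= p].
Proof.
elim: L => [|W L IH] z.
  exists [:: z]; split => //.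
  by move=> d; split; [move=> H y; rewrite inE => /eqP-> | apply; rewrite inE].
case E: (fmeet W) => [m|]; last first.
  have [P [NP GP HP]] := IH z; exists P; split => // p Hp W'.
  rewrite inE => /orP[/eqP->|HW'] Hm; last exact: HP.
  by case: Hm => m' Hm'; rewrite E in Hm'.
case: (boolP (m <= z)) => Hmz; last first.
  have [P [NP GP HP]] := IH z; exists P; split => // p Hp W'.
  rewrite inE => /orP[/eqP->|HW'] Hm; last exact: HP.
  by case: Hm => m' Hm' Hle; rewrite E in Hm'; case: Hm' => Hm'; subst m'; rewrite Hle in Hmz.
have NW : enum_fset W != [::] by rewrite /fmeet in E; move: E; case: (enum_fset W).
have [Q [NQ GQ HQ]] := split_dist Hd NW (fmeet_glb E) Hmz.
have [P [NP GP HP]] := concat_lemma (R := fun q p => q <= p /\ forall W, W \in L -> meet_in (fun m => m <= q) W ->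
      exists2 w, w \in W & w <= p) (s := Q)
  (fun q _ => let: ex_intro P (And3 a b c) := IH q in
     ex_intro _ P (And3 a b (fun p Hp => conj (glbs_le b Hp) (c p Hp)))).
exists P; split.
- by rewrite NP.
- move=> d; split; first by move=> Hd' p Hp; apply: (GP d).2 Hp => q Hq; apply: (GQ d).1.
  by move=> H; apply/(GQ d).2/(GP d).1.
- move=> p Hp W'; have [q Hq [Hqp Hq2]] := HP p Hp.
  rewrite inE => /orP[/eqP->|HW'] Hm.
    have [w Hw Hwq] := HQ q Hq; exists w => //; exact: le_trans Hqp.
  apply: Hq2 => //; case: Hm => m' Hm' Hm'z; exists m' => //.
  by apply: le_trans Hm'z _; apply: glbs_le GQ Hq.
Qed.

End Aux.

Section Main.
Context {disp : Order.disp_t} {S : meetSemilatticeType disp}.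

Lemma card_im (f : S -> S) (Y : {fset S}) : (#|` f @` Y| <= #|` Y|)%N.
Proof. exact: leq_imfset_card. Qed.

Lemma transfer (U : S -> Prop) (hU : upset U) n (Y A : {fset S}) :
  Y != fset0 -> (#|` Y| <= n)%N ->
  (forall y, y \in Y -> exists2 w, w \in A & w <= y) ->
  (forall Y', subset_n n Y' A -> meet_in U Y') -> meet_in U Y.
Proof.
move=> NY cY HY HA.
have [y0 Hy0] := fset0Pn _ NY.
pose w := fun y => epsilon (inhabits y0) (fun w => w \in A /\ w <= y).
have Hw : forall y, y \in Y -> w y \in A /\ w y <= y.
  move=> y Hy; apply: (epsilon_spec (inhabits y0) (fun w => w \in A /\ w <= y)).
  by have [v Hv Hvy] := HY y Hy; exists v.
have NY' : w @` Y != fset0 by apply/fset0Pn; exists (w y0); apply: in_imfset.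
have [m' Hm' Um'] : meet_in U (w @` Y).
  apply: HA; split => //.
  - by apply/fsubsetP => v /imfsetP [y Hy ->]; case: (Hw y Hy).
  - exact: leq_trans (card_im _ _) cY.
have [m Hm] := fmeet_ex NY.
exists m => //; apply: hU Um' _.
apply/((fmeet_glb Hm) m').2 => y Hy.
apply: le_trans (Hw y Hy).2.
by apply: glbs_le (fmeet_glb Hm') _; apply: in_imfset.
Qed.


Lemma glbs_eqmem (s1 s2 : seq S) m : s1 =i s2 -> glbs s1 m -> glbs s2 m.
Proof. by move=> E H c; rewrite H; split => Hc x Hx; apply: Hc; rewrite ?E // -E. Qed.

Lemma fmeet_sub1 (x : S) (Y : {fset S}) : Y `<=` [fset x] -> Y != fset0 -> fmeet Y = Some x.
Proof.
move=> /fsubsetP HY NY; apply: fmeet_glbE => // c; split.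
  move=> Hc y Hy; have := HY y Hy; rewrite in_fset1 => /eqP->; exact: Hc.
move=> H; have [y Hy] := fset0Pn _ NY; have := HY y Hy; rewrite in_fset1 => /eqP E.
by subst y; apply: H.
Qed.

Lemma fmeet1 (x : S) : fmeet [fset x] = Some x.
Proof. by apply: fmeet_sub1 => //; apply/fset0Pn; exists x; rewrite in_fset1. Qed.

Lemma sub_n1 n (x : S) (X : {fset S}) : (1 <= n)%N -> x \in X -> subset_n n [fset x] X.
Proof.
move=> Hn Hx; split; first by apply/fset0Pn; exists x; rewrite in_fset1.
  by apply/fsubsetP => y; rewrite in_fset1 => /eqP->.
by rewrite cardfs1.
Qed.

Lemma U_of_sub (U : S -> Prop) n (X : {fset S}) : (1 <= n)%N ->
  (forall Y, subset_n n Y X -> meet_in U Y) -> forall x, x \in X -> U x.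
Proof.
move=> Hn H x Hx; have [m Hm Um] := H _ (sub_n1 Hn Hx).
by rewrite fmeet1 in Hm; case: Hm => E; rewrite E.
Qed.

Lemma seq_fset_glb (P : seq S) t : P != [::] -> glbs P t ->
  seq_fset tt P != fset0 /\ fmeet (seq_fset tt P) = Some t.
Proof.
move=> NP GP.
have NX : seq_fset tt P != fset0.
  by move: NP; case: P GP => // x s _ _; apply/fset0Pn; exists x; rewrite seq_fsetE inE eqxx.
split => //; apply: fmeet_glbE => //; apply: glbs_eqmem GP => y.
by have -> : (y \in enum_fset (seq_fset tt P)) = (y \in seq_fset tt P) by []; rewrite seq_fsetE.
Qed.


Definition goodX n (U : S -> Prop) (X : {fset S}) : Prop :=
  [/\ X != fset0, (forall x, x \in X -> U x) & (forall Y, subset_n n Y X -> meet_in U Y)].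

Definition Gle n (U : S -> Prop) (a : S) : Prop :=
  exists X : {fset S}, [/\ X != fset0, (forall x, x \in X -> U x),
        (forall Y, subset_n n Y X -> meet_in U Y) &
        exists2 m, fmeet X = Some m & m <= a].

Lemma Gle_closed (Hd : distributive_msl (S := S)) n (U : S -> Prop) (hU : upset U) :
  (1 <= n)%N -> forall Z : {fset S}, Z != fset0 -> (forall z, z \in Z -> Gle n U z) ->
  (forall Y, subset_n n Y Z -> meet_in (Gle n U) Y) -> meet_in (Gle n U) Z.
Proof.
move=> Hn Z NZ _ HZ.
pose Pf := fun I W => goodX n U W /\ exists2 m, fmeet W = Some m & meet_in (fun mI => m <= mI) I.
pose f := fun I => epsilon (inhabits fset0) (Pf I).
have Hf : forall I, subset_n n I Z -> Pf I (f I).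
  move=> I HI; apply: (epsilon_spec (inhabits fset0) (Pf I)).
  have [mI HmI [W [W1 W2 W3 [m Hm Hle]]]] := HZ I HI.
  by exists W; split; [split | exists m => //; exists mI].
pose L := map f (enum_fset (fpowerset Z)).
pose R := fun z p => z <= p /\ forall W, W \in L -> meet_in (fun m => m <= z) W ->
      exists2 w, w \in W & w <= p.
have [P [NP GP HP]] := concat_lemma (R := R) (s := enum_fset Z)
  (fun q _ => let: ex_intro P (And3 a b c) := Lsplit Hd L q in
     ex_intro _ P (And3 a b (fun p Hp => conj (glbs_le b Hp) (c p Hp)))).
have [mZ HmZ] := fmeet_ex NZ.
have NP' : P != [::].
  by rewrite NP; move: HmZ; rewrite /fmeet; case: (enum_fset Z).
have GP' : glbs P mZ.
  by move=> c; rewrite (fmeet_glb HmZ); split => H; apply/GP.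
have [NX HX] := seq_fset_glb NP' GP'.
have key : forall Y, subset_n n Y (seq_fset tt P) -> meet_in U Y.
  move=> Y [NY /fsubsetP sY cY].
  have [y0 Hy0] := fset0Pn _ NY.
  have HYP : forall y, y \in Y -> exists z, z \in enum_fset Z /\ R z y.
    move=> y Hy; have := sY y Hy; rewrite seq_fsetE => HyP.
    by have [z Hz Hr] := HP y HyP; exists z.
  pose anc := fun y => epsilon (inhabits y0) (fun z => z \in enum_fset Z /\ R z y).
  have Hanc : forall y, y \in Y -> anc y \in enum_fset Z /\ R (anc y) y.
    by move=> y Hy; apply: (epsilon_spec (inhabits y0) (fun z => z \in enum_fset Z /\ R z y)); apply: HYP.
  pose I := anc @` Y.
  have HI : subset_n n I Z.
    split.
    - by apply/fset0Pn; exists (anc y0); apply: in_imfset.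
    - by apply/fsubsetP => v /imfsetP [y Hy ->]; case: (Hanc y Hy).
    - exact: leq_trans (card_im _ _) cY.
  have [[_ _ gW] [m Hm [mI HmI HmmI]]] := Hf I HI.
  have fIL : f I \in L.
    by apply: map_f; have -> : (I \in enum_fset (fpowerset Z)) = (I \in fpowerset Z) by [];
       rewrite fpowersetE; case: HI.
  apply: (@transfer U hU n Y (f I) NY cY _ gW) => y Hy.
  have [_ [_ Hr]] := Hanc y Hy.
  apply: Hr fIL _; exists m => //; apply: le_trans HmmI _.
  by apply: glbs_le (fmeet_glb HmI) _; apply: in_imfset.
exists mZ => //; exists (seq_fset tt P); split => //.
- exact: U_of_sub Hn key.
- by exists mZ.
Qed.


Lemma Gle_filter (Hd : distributive_msl (S := S)) n (U : S -> Prop) (hU : upset U) :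
  (1 <= n)%N -> n_filter n (Gle n U).
Proof.
move=> Hn; split.
  move=> x y [X [A B C [m Hm Hmx]]] Hxy; exists X; split => //; exists m => //.
  exact: le_trans Hxy.
move=> X NX HXF HY; exact: (Gle_closed Hd hU Hn NX HXF HY).
Qed.

Lemma U_Gle n (U : S -> Prop) x : U x -> Gle n U x.
Proof.
move=> Ux; exists [fset x]; split.
- by apply/fset0Pn; exists x; rewrite in_fset1.
- by move=> y; rewrite in_fset1 => /eqP->.
- by move=> Y [NY sY _]; exists x => //; apply: fmeet_sub1.
- by exists x; rewrite ?fmeet1.
Qed.

Lemma Gle_gen n (U : S -> Prop) a : Gle n U a -> gen_n_filter n U a.
Proof.
move=> [X [NX UX HX [m Hm Hma]]] F [uF cF] UF.
have [m' Hm' Fm'] := cF X NX (fun x Hx => UF x (UX x Hx))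
  (fun Y HY => let: ex_intro2 m0 a b := HX Y HY in ex_intro2 _ _ m0 a (UF _ b)).
rewrite Hm in Hm'; case: Hm' => E; subst m'; exact: uF Fm' Hma.
Qed.

Lemma Gle_eq (Hd : distributive_msl (S := S)) n (U : S -> Prop) (hU : upset U) a :
  (1 <= n)%N -> Gle n U a ->
  exists X : {fset S}, [/\ X != fset0, (forall x, x \in X -> U x),
        (forall Y, subset_n n Y X -> meet_in U Y) & fmeet X = Some a].
Proof.
move=> Hn [X [NX UX HX [m Hm Hma]]].
have NE : enum_fset X != [::] by move: Hm; rewrite /fmeet; case: (enum_fset X).
have [Q [NQ GQ HQ]] := split_dist Hd NE (fmeet_glb Hm) Hma.
have [NX' HX'] := seq_fset_glb NQ GQ.
have key : forall Y, subset_n n Y (seq_fset tt Q) -> meet_in U Y.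
  move=> Y [NY /fsubsetP sY cY]; apply: (@transfer U hU n Y X NY cY _ HX) => y Hy.
  by have := sY y Hy; rewrite seq_fsetE => /HQ.
exists (seq_fset tt Q); split => //; exact: U_of_sub Hn key.
Qed.

End Main.

Unset Implicit Arguments.

Theorem mainTheorem2 (disp : Order.disp_t) (S : meetSemilatticeType disp)
  (n : nat) (U : S -> Prop) :
  distributive_msl (S := S) -> (1 <= n)%N -> upset U ->
  forall a : S,
    (gen_n_filter n U a <->
      exists X : {fset S}, [/\ X != fset0, (forall x, x \in X -> U x),
        (forall Y, subset_n n Y X -> meet_in U Y) &
        exists2 m, fmeet X = Some m & m <= a]) /\
    (gen_n_filter n U a <->
      exists X : {fset S}, [/\ X != fset0, (forall x, x \in X -> U x),
        (forall Y, subset_n n Y X -> meet_in U Y) &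
        fmeet X = Some a]).
Proof.
move=> Hd Hn hU a.
have E1 : gen_n_filter n U a <-> Gle n U a.
  split; last exact: Gle_gen.
  move=> H; apply: H; [exact: Gle_filter | exact: U_Gle].
split; first exact: E1.
rewrite E1; split; first exact: Gle_eq.
by move=> [X [A B C D]]; exists X; split => //; exists a.
Qed.
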